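(* Under the hypotheses of Lemma 7 (heterogeneous agents $\dot x_i=\sum_j\alpha_{ij}(t)(\mathrm{sat}_j(x_j)-\mathrm{sat}_i(x_i))$ with $s_1>\dots>s_N>0$, time-varying undirected graph satisfying the standing assumptions, integrally connected over $[0,\infty)$, with $\alpha_{ij}(t)\in\{0\}\cup[\alpha_{\min},\alpha_{\max}]$, $0<\alpha_{\min}\le\alpha_{\max}$), for every $i\in\mathcal V$ there exists $x_i^*$ with $\lim_{t\to\infty}x_i(t)=x_i^*$, and $x_i^*\in[-s_N,s_N]$ for all $i\in\{1,\dots,N-1\}$.
   Context: $\mathrm{sat}_i(x)=\mathrm{sign}(x)\min\{|x|,s_i\}$. Standing assumptions: $\alpha_{ij}(t)=\alpha_{ji}(t)\ge0$, each $\alpha_{ij}$ continuous on $[0,\infty)$ except on a set of measure zero; Carathéodory solutions. Integral graph: adjacency $\bar\alpha_{ij}=1$ if $\int_0^\infty\alpha_{ij}(t)dt=\infty$, else $0$; integrally connected means this graph is connected. *)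

(* Defs.v *)
From Stdlib Require Import Reals Lra Lia.
Open Scope R_scope.

Definition sgn (x : R) : R :=
  if Rlt_dec 0 x then 1 else if Rlt_dec x 0 then -1 else 0.

Definition sat (s x : R) : R := sgn x * Rmin (Rabs x) s.

Fixpoint sumN (n : nat) (f : nat -> R) : R :=
  match n with
  | O => 0
  | S m => sumN m f + f m
  end.

Definition measure_zero (A : R -> Prop) : Prop :=
  forall eps, 0 < eps ->
    exists a b : nat -> R,
      (forall n, a n <= b n) /\
      (forall n, sumN n (fun k => b k - a k) <= eps) /\
      (forall t, A t -> exists n, a n < t < b n).

Definition ae_continuous (f : R -> R) : Prop :=
  measure_zero (fun t => 0 <= t /\ ~ continuity_pt f t).

Definition integral_infinite (f : R -> R) : Prop :=
  forall M, exists T, 0 <= T /\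
    exists pr : Riemann_integrable f 0 T, M < RiemannInt pr.

Definition integral_edge (N : nat) (alpha : nat -> nat -> R -> R) (i j : nat) : Prop :=
  (i < N)%nat /\ (j < N)%nat /\ integral_infinite (alpha i j).

Inductive connected_by (E : nat -> nat -> Prop) : nat -> nat -> Prop :=
  | cb_refl x : connected_by E x x
  | cb_step x y z : E x y -> connected_by E y z -> connected_by E x z.

Definition integrally_connected (N : nat) (alpha : nat -> nat -> R -> R) : Prop :=
  forall i j, (i < N)%nat -> (j < N)%nat -> connected_by (integral_edge N alpha) i j.

Definition rhs (N : nat) (alpha : nat -> nat -> R -> R) (s : nat -> R)
  (x : nat -> R -> R) (i : nat) (t : R) : R :=
  sumN N (fun j => alpha i j t * (sat (s j) (x j t) - sat (s i) (x i t))).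

Definition caratheodory_solution (N : nat) (alpha : nat -> nat -> R -> R)
  (s : nat -> R) (x : nat -> R -> R) : Prop :=
  forall i, (i < N)%nat -> forall t, 0 <= t ->
    exists pr : Riemann_integrable (rhs N alpha s x i) 0 t,
      RiemannInt pr = x i t - x i 0.

Definition lim_infty (f : R -> R) (l : R) : Prop :=
  forall eps, 0 < eps -> exists T, forall t, T <= t -> Rabs (f t - l) < eps.

(* Main.v *)
Require Import Defs.
From Stdlib Require Import Reals Lra Lia Classical FunctionalExtensionality ZArith.
Open Scope R_scope.

Lemma sat_spec s x : 0 <= s ->
  (s < x /\ sat s x = s) \/ (x < -s /\ sat s x = -s) \/ (-s <= x <= s /\ sat s x = x).
Proof.
  intros Hs. unfold sat, sgn, Rmin.
  destruct (Rlt_dec 0 x) as [H|H].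
  - rewrite Rabs_right by lra. destruct (Rle_dec x s); [right;right|left]; split; lra.
  - destruct (Rlt_dec x 0) as [H'|H'].
    + rewrite Rabs_left by lra. destruct (Rle_dec (-x) s); [right;right|right;left]; split; lra.
    + assert (x = 0) by lra. subst. rewrite Rabs_R0. destruct (Rle_dec 0 s); right; right; split; lra.
Qed.

Lemma sat_mono s x x' : 0 <= s -> x <= x' -> sat s x <= sat s x'.
Proof. intros Hs H. destruct (sat_spec s x Hs) as [[? ->]|[[? ->]|[? ->]]];
  destruct (sat_spec s x' Hs) as [[? ->]|[[? ->]|[? ->]]]; lra. Qed.

Lemma sat_lip s x x' : 0 <= s -> Rabs (sat s x - sat s x') <= Rabs (x - x').
Proof. intros Hs. destruct (sat_spec s x Hs) as [[? ->]|[[? ->]|[? ->]]];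
  destruct (sat_spec s x' Hs) as [[? ->]|[[? ->]|[? ->]]];
  unfold Rabs; repeat destruct Rcase_abs; lra. Qed.

Lemma sat_bound s x : 0 <= s -> -s <= sat s x <= s.
Proof. intros Hs. destruct (sat_spec s x Hs) as [[? ->]|[[? ->]|[? ->]]]; lra. Qed.

Lemma sat_opp s x : 0 <= s -> sat s (-x) = - sat s x.
Proof. intros Hs. destruct (sat_spec s x Hs) as [[? ->]|[[? ->]|[? ->]]];
  destruct (sat_spec s (-x) Hs) as [[? ->]|[[? ->]|[? ->]]]; lra. Qed.

Lemma sat_id s x : 0 <= s -> -s <= x <= s -> sat s x = x.
Proof. intros Hs H. destruct (sat_spec s x Hs) as [[? ->]|[[? ->]|[? ->]]]; lra. Qed.

Lemma sat_inv s x : 0 <= s -> Rabs (sat s x) < s -> sat s x = x.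
Proof. intros Hs. destruct (sat_spec s x Hs) as [[? ->]|[[? ->]|[? ->]]];
  unfold Rabs; repeat destruct Rcase_abs; lra. Qed.

Lemma sumN_ext n f g : (forall k, (k < n)%nat -> f k = g k) -> sumN n f = sumN n g.
Proof. induction n; simpl; intros H; auto. rewrite IHn by (intros; apply H; lia). rewrite H by lia. auto. Qed.

Lemma sumN_le n f g : (forall k, (k < n)%nat -> f k <= g k) -> sumN n f <= sumN n g.
Proof. induction n; simpl; intros H; [lra|]. assert (f n <= g n) by (apply H; lia).
  assert (sumN n f <= sumN n g) by (apply IHn; intros; apply H; lia). lra. Qed.

Lemma sumN_plus n f g : sumN n (fun k => f k + g k) = sumN n f + sumN n g.
Proof. induction n; simpl; [lra|]. rewrite IHn. lra. Qed.

Lemma sumN_minus n f g : sumN n (fun k => f k - g k) = sumN n f - sumN n g.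
Proof. induction n; simpl; [lra|]. rewrite IHn. lra. Qed.

Lemma sumN_scal n c f : sumN n (fun k => c * f k) = c * sumN n f.
Proof. induction n; simpl; [lra|]. rewrite IHn. lra. Qed.

Lemma sumN_const n c : sumN n (fun _ => c) = INR n * c.
Proof. induction n; simpl sumN; [simpl; lra|]. rewrite IHn, S_INR. lra. Qed.

Lemma sumN_zero n : sumN n (fun _ => 0) = 0.
Proof. rewrite sumN_const. lra. Qed.

Lemma sumN_ge_term n f i : (forall k, (k < n)%nat -> 0 <= f k) -> (i < n)%nat -> f i <= sumN n f.
Proof. induction n; simpl; intros H Hi; [lia|].
  assert (0 <= sumN n f). { replace 0 with (sumN n (fun _ => 0)) by apply sumN_zero. apply sumN_le. intros; apply H; lia. }
  destruct (Nat.eq_dec i n). - subst. lra.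
  - assert (f i <= sumN n f) by (apply IHn; [intros; apply H|]; lia). assert (0 <= f n) by (apply H; lia). lra. Qed.

Lemma sumN_nonneg n f : (forall k, (k < n)%nat -> 0 <= f k) -> 0 <= sumN n f.
Proof. intros H. replace 0 with (sumN n (fun _ => 0)) by apply sumN_zero. apply sumN_le. auto. Qed.

Lemma sumN_ge_two n f i j : (forall k, (k < n)%nat -> 0 <= f k) -> (i < n)%nat -> (j < n)%nat -> i <> j ->
  f i + f j <= sumN n f.
Proof. induction n; simpl; intros H Hi Hj Hij; [lia|].
  assert (0 <= sumN n f) by (apply sumN_nonneg; intros; apply H; lia).
  destruct (Nat.eq_dec i n).
  - subst. assert (f j <= sumN n f) by (apply sumN_ge_term; [intros; apply H|]; lia). lra.
  - destruct (Nat.eq_dec j n).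
    + subst. assert (f i <= sumN n f) by (apply sumN_ge_term; [intros; apply H|]; lia). lra.
    + assert (f i + f j <= sumN n f) by (apply IHn; [intros; apply H|..]; lia). assert (0 <= f n) by (apply H; lia). lra.
Qed.

Lemma sumN_swap n m f : sumN n (fun i => sumN m (fun j => f i j)) = sumN m (fun j => sumN n (fun i => f i j)).
Proof. induction n; simpl. - rewrite sumN_zero. auto.
  - rewrite IHn. rewrite <- sumN_plus. auto. Qed.

Lemma sumN_abs_le n f c : (forall k, (k < n)%nat -> Rabs (f k) <= c) -> Rabs (sumN n f) <= INR n * c.
Proof. induction n; simpl sumN; intros H. - simpl. rewrite Rabs_R0. lra.
  - rewrite S_INR. eapply Rle_trans; [apply Rabs_triang|]. assert (Rabs (f n) <= c) by (apply H; lia).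
    assert (Rabs (sumN n f) <= INR n * c) by (apply IHn; intros; apply H; lia). lra. Qed.

Lemma sumN_lower n f m : (forall k, (k < n)%nat -> m <= f k) -> INR n * m <= sumN n f.
Proof. intros H. rewrite <- sumN_const. apply sumN_le. auto. Qed.

Lemma sym_identity N (a : nat -> nat -> R) (d y : nat -> R) :
  (forall i j, (i < N)%nat -> (j < N)%nat -> a i j = a j i) ->
  sumN N (fun i => d i * sumN N (fun j => a i j * (y j - y i))) =
  - / 2 * sumN N (fun i => sumN N (fun j => a i j * ((d i - d j) * (y i - y j)))).
Proof.
  intros Ha.
  set (S1 := sumN N (fun i => d i * sumN N (fun j => a i j * (y j - y i)))).
  assert (E1 : S1 = sumN N (fun i => sumN N (fun j => a i j * (d i * (y j - y i))))).
  { unfold S1. apply sumN_ext. intros i Hi. rewrite <- sumN_scal. apply sumN_ext. intros; ring. }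
  assert (E2 : S1 = sumN N (fun i => sumN N (fun j => a i j * (d j * (y i - y j))))).
  { rewrite E1, sumN_swap. apply sumN_ext. intros i Hi. apply sumN_ext. intros j Hj. rewrite (Ha j i) by auto. ring. }
  assert (E3 : sumN N (fun i => sumN N (fun j => a i j * ((d i - d j) * (y i - y j)))) = - (2 * S1)).
  { replace (2 * S1) with (S1 + S1) by ring. pattern S1 at 1. rewrite E1. rewrite E2.
    rewrite <- sumN_plus. replace (- _) with ((-1) * sumN N (fun k => sumN N (fun j => a k j * (d k * (y j - y k))) +
      sumN N (fun j => a k j * (d j * (y k - y j))))) by ring.
    rewrite <- sumN_scal. apply sumN_ext. intros i Hi.
    rewrite <- sumN_plus. rewrite <- sumN_scal. apply sumN_ext. intros; ring. }
  rewrite E3. field.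
Qed.

Record Setting (N : nat) (s : nat -> R) (alpha : nat -> nat -> R -> R) (amax : R) (x : nat -> R -> R) : Prop := {
  st_spos : forall i, (i < N)%nat -> 0 < s i;
  st_sle : forall i, (i < N)%nat -> s i <= s 0%nat;
  st_sym : forall i j t, 0 <= t -> alpha i j t = alpha j i t;
  st_ab : forall i j t, 0 <= t -> 0 <= alpha i j t <= amax;
  st_IR : forall i, (i < N)%nat -> forall a b, 0 <= a <= b ->
    exists pr : Riemann_integrable (rhs N alpha s x i) a b, RiemannInt pr = x i b - x i a
}.

Lemma Rabs_le_inv a b : Rabs a <= b -> -b <= a <= b.
Proof. unfold Rabs; destruct Rcase_abs; intros; lra. Qed.

Definition yv (s : nat -> R) (x : nat -> R -> R) i t := sat (s i) (x i t).
Definition Bnd N s amax := INR N * (2 * amax * s 0%nat).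

Lemma int_le_const f a b C (pr : Riemann_integrable f a b) : a <= b ->
  (forall t, a < t < b -> f t <= C) -> RiemannInt pr <= C * (b - a).
Proof. intros Hab H. rewrite <- (RiemannInt_P15 (RiemannInt_P14 a b C)).
  apply RiemannInt_P19; auto. Qed.




Lemma rhs_bound N s alpha amax x (H : Setting N s alpha amax x) i t :
  (i < N)%nat -> 0 <= t -> Rabs (rhs N alpha s x i t) <= Bnd N s amax.
Proof.
  intros Hi Ht. unfold rhs, Bnd. apply sumN_abs_le. intros j Hj.
  destruct (st_ab _ _ _ _ _ H i j t Ht).
  pose proof (sat_bound (s j) (x j t) (Rlt_le _ _ (st_spos _ _ _ _ _ H j Hj))).
  pose proof (sat_bound (s i) (x i t) (Rlt_le _ _ (st_spos _ _ _ _ _ H i Hi))).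
  pose proof (st_sle _ _ _ _ _ H i Hi). pose proof (st_sle _ _ _ _ _ H j Hj).
  rewrite Rabs_mult, (Rabs_right (alpha i j t)) by lra.
  replace (2 * amax * s 0%nat) with (amax * (2 * s 0%nat)) by ring.
  apply Rmult_le_compat; try lra; [apply Rabs_pos|].
  unfold Rabs; destruct Rcase_abs; lra.
Qed.

Lemma Bnd_nonneg N s alpha amax x (H : Setting N s alpha amax x) : (0 < N)%nat -> 0 <= Bnd N s amax.
Proof. intros HN. unfold Bnd. pose proof (st_spos _ _ _ _ _ H 0%nat HN).
  pose proof (st_ab _ _ _ _ _ H 0%nat 0%nat 0 (Rle_refl 0)). apply Rmult_le_pos; [apply pos_INR|]. nra. Qed.

Lemma x_lip N s alpha amax x (H : Setting N s alpha amax x) i a b :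
  (i < N)%nat -> 0 <= a <= b -> Rabs (x i b - x i a) <= Bnd N s amax * (b - a).
Proof.
  intros Hi Hab. destruct (st_IR _ _ _ _ _ H i Hi a b Hab) as [pr E]. rewrite <- E.
  apply Rabs_le. split.
  - pose proof (RiemannInt_P10 (-1) (RiemannInt_P14 a b 0) pr) as pr'.
    assert (HH : RiemannInt pr' <= Bnd N s amax * (b - a)).
    { apply int_le_const; [lra|]. intros t Ht. pose proof (rhs_bound _ _ _ _ _ H i t Hi ltac:(lra)).
      unfold fct_cte. apply Rabs_le_inv in H0. lra. }
    rewrite (RiemannInt_P13 (RiemannInt_P14 a b 0) pr pr') in HH.
    rewrite RiemannInt_P15 in HH. lra.
  - apply int_le_const; [lra|]. intros t Ht. pose proof (rhs_bound _ _ _ _ _ H i t Hi ltac:(lra)).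
    apply Rabs_le_inv in H0. lra.
Qed.

Lemma y_lip N s alpha amax x (H : Setting N s alpha amax x) i a b :
  (i < N)%nat -> 0 <= a <= b -> Rabs (yv s x i b - yv s x i a) <= Bnd N s amax * (b - a).
Proof. intros Hi Hab. unfold yv. eapply Rle_trans; [apply sat_lip; apply Rlt_le, (st_spos _ _ _ _ _ H i Hi)|].
  eapply x_lip; eauto. Qed.

Lemma comb_IR N s alpha amax x (H : Setting N s alpha amax x) (d : nat -> R) a b : 0 <= a <= b ->
  forall n, (n <= N)%nat ->
  exists pr : Riemann_integrable (fun t => sumN n (fun i => d i * rhs N alpha s x i t)) a b,
    RiemannInt pr = sumN n (fun i => d i * (x i b - x i a)).
Proof.
  intros Hab. induction n; intros Hn.
  - simpl. exists (RiemannInt_P14 a b 0). transitivity (0 * (b - a)); [apply RiemannInt_P15|ring].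
  - destruct IHn as [pr1 E1]; [lia|]. destruct (st_IR _ _ _ _ _ H n ltac:(lia) a b Hab) as [pr2 E2].
    exists (RiemannInt_P10 (d n) pr1 pr2). simpl.
    rewrite (RiemannInt_P13 pr1 pr2 (RiemannInt_P10 (d n) pr1 pr2)). rewrite E1, E2. auto.
Qed.

Lemma flux_identity N s alpha amax x (H : Setting N s alpha amax x) (d : nat -> R) t : 0 <= t ->
  sumN N (fun i => d i * rhs N alpha s x i t) =
  - / 2 * sumN N (fun i => sumN N (fun j => alpha i j t * ((d i - d j) * (yv s x i t - yv s x j t)))).
Proof. intros Ht. unfold rhs, yv. apply (sym_identity N (fun i j => alpha i j t) d (fun j => sat (s j) (x j t))).
  intros. apply (st_sym _ _ _ _ _ H). auto. Qed.

Definition gl (s c x : R) := if Rlt_dec c (-s) then x else if Rlt_dec c s then Rmax (x - c) 0 else 0.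
Definition indc (c y : R) := if Rlt_dec c y then 1 else 0.

Lemma g_subgrad s c xa xb : 0 < s -> gl s c xb - gl s c xa <= indc c (sat s xb) * (xb - xa).
Proof.
  intros Hs. unfold gl, indc, Rmax.
  destruct (sat_spec s xb ltac:(lra)) as [[? ->]|[[? ->]|[? ->]]];
  repeat (destruct Rlt_dec); repeat (destruct Rle_dec); lra.
Qed.

Lemma ind_mono c y1 y2 : (indc c y1 - indc c y2) * (y1 - y2) >= 0.
Proof. unfold indc. repeat destruct Rlt_dec; nra. Qed.

Definition Fl N s (x : nat -> R -> R) c t := sumN N (fun i => gl (s i) c (x i t)).

Lemma local_step N s alpha amax x (H : Setting N s alpha amax x) c a b : 0 <= a <= b ->
  Fl N s x c b - Fl N s x c a <= (INR N * INR N * amax * Bnd N s amax) * ((b - a) * (b - a)).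
Proof.
  intros Hab. set (B := Bnd N s amax). set (d := fun i => indc c (yv s x i b)).
  assert (E1 : Fl N s x c b - Fl N s x c a <= sumN N (fun i => d i * (x i b - x i a))).
  { unfold Fl. rewrite <- sumN_minus. apply sumN_le. intros i Hi. unfold d, yv.
    apply g_subgrad. apply (st_spos _ _ _ _ _ H i Hi). }
  destruct (comb_IR _ _ _ _ _ H d a b Hab N (le_n N)) as [pr E]. rewrite <- E in E1.
  eapply Rle_trans; [apply E1|].
  replace ((INR N * INR N * amax * B) * ((b - a) * (b - a))) with ((INR N * INR N * amax * B * (b - a)) * (b - a)) by ring.
  apply int_le_const; [lra|]. intros t Ht.
  rewrite (flux_identity _ _ _ _ _ H d t) by lra.
  assert (Hlow : forall i j, (i < N)%nat -> (j < N)%nat ->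
    - (amax * (2 * B * (b - a))) <= alpha i j t * ((d i - d j) * (yv s x i t - yv s x j t))).
  { intros i j Hi Hj. destruct (st_ab _ _ _ _ _ H i j t ltac:(lra)) as [Ha1 Ha2].
    pose proof (y_lip _ _ _ _ _ H i t b Hi ltac:(lra)) as Li.
    pose proof (y_lip _ _ _ _ _ H j t b Hj ltac:(lra)) as Lj.
    apply Rabs_le_inv in Li. apply Rabs_le_inv in Lj. fold B in Li, Lj.
    pose proof (ind_mono c (yv s x i b) (yv s x j b)) as M. fold (d i) (d j) in M.
    assert (Hd : (d i = 0 \/ d i = 1) /\ (d j = 0 \/ d j = 1)) by (unfold d, indc; split; destruct Rlt_dec; auto).
    assert (HB : 0 <= B * (b - t)) by (apply Rmult_le_pos; [|lra]; assert (0 < N)%nat by lia; apply (Bnd_nonneg _ _ _ _ _ H); auto).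
    assert (Hbt : B * (b - t) <= B * (b - a)) by (apply Rmult_le_compat_l; [apply (Bnd_nonneg _ _ _ _ _ H); lia|lra]).
    assert (He : - (2 * B * (b - a)) <= (d i - d j) * (yv s x i t - yv s x j t)).
    { destruct Hd as [[Hi0 | Hi0] [Hj0 | Hj0]]; rewrite Hi0, Hj0 in *; ring_simplify; ring_simplify in M; lra. }
    destruct (Rle_dec 0 ((d i - d j) * (yv s x i t - yv s x j t))); nra. }
  assert (HS : INR N * (INR N * - (amax * (2 * B * (b - a)))) <=
     sumN N (fun i => sumN N (fun j => alpha i j t * ((d i - d j) * (yv s x i t - yv s x j t))))).
  { apply sumN_lower. intros i Hi. apply sumN_lower. intros j Hj. apply Hlow; auto. }
  nra.
Qed.

Lemma mono_from_local (Phi : R -> R) K t u : 0 <= K ->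
  (forall a b, t <= a <= b -> Phi b - Phi a <= K * ((b - a) * (b - a))) -> t <= u -> Phi u <= Phi t.
Proof.
  intros HK Hl Htu. destruct (Rle_dec (Phi u) (Phi t)) as [|Hn]; auto. exfalso.
  set (del := Phi u - Phi t). assert (Hd : 0 < del) by (unfold del; lra).
  destruct (archimed (K * ((u - t) * (u - t)) / del)) as [Ha _].
  set (n := Z.to_nat (up (K * ((u - t) * (u - t)) / del))).
  assert (Hn1 : K * ((u - t) * (u - t)) / del < INR n).
  { assert (0 <= K * ((u - t) * (u - t)) / del) by (apply Rmult_le_pos; [apply Rmult_le_pos; nra|apply Rlt_le, Rinv_0_lt_compat; lra]).
    unfold n. rewrite INR_IZR_INZ. rewrite Z2Nat.id. lra.
    apply le_IZR. simpl. lra. }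
  assert (Hnpos : (0 < n)%nat).
  { destruct n; [|lia]. simpl in Hn1. assert (0 <= K * ((u - t) * (u - t)) / del) by (apply Rmult_le_pos; [apply Rmult_le_pos; nra|apply Rlt_le, Rinv_0_lt_compat; lra]). lra. }
  set (h := (u - t) / INR n).
  assert (HnR : 0 < INR n) by (apply lt_0_INR; auto).
  assert (Hh : 0 <= h) by (unfold h; apply Rmult_le_pos; [lra|apply Rlt_le, Rinv_0_lt_compat; lra]).
  assert (Step : forall k, Phi (t + INR k * h) - Phi t <= INR k * (K * (h * h))).
  { induction k. - simpl. replace (t + 0 * h) with t by ring. lra.
    - rewrite S_INR. pose proof (Hl (t + INR k * h) (t + (INR k + 1) * h)) as L.
      assert (0 <= INR k) by apply pos_INR.
      replace (t + (INR k + 1) * h - (t + INR k * h)) with h in L by ring.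
      assert (t <= t + INR k * h <= t + (INR k + 1) * h) by (split; nra). specialize (L H0). nra. }
  specialize (Step n). replace (t + INR n * h) with u in Step by (unfold h; field; lra).
  fold del in Step.
  assert (INR n * (K * (h * h)) = K * ((u - t) * (u - t)) / INR n) by (unfold h; field; lra).
  rewrite H in Step.
  assert (K * ((u - t) * (u - t)) < INR n * del).
  { apply (Rmult_lt_compat_r del) in Hn1; auto. unfold Rdiv in Hn1. rewrite Rmult_assoc, Rinv_l in Hn1 by lra. lra. }
  assert (K * ((u - t) * (u - t)) / INR n < del).
  { apply (Rmult_lt_reg_r (INR n)); auto. unfold Rdiv. rewrite Rmult_assoc, Rinv_l by lra. lra. }
  lra.
Qed.

Lemma Fl_mono N s alpha amax x (H : Setting N s alpha amax x) c t u : 0 <= t -> t <= u ->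
  Fl N s x c u <= Fl N s x c t.
Proof.
  intros Ht Htu. destruct N as [|N'].
  - unfold Fl. simpl. lra.
  - apply (mono_from_local (Fl (S N') s x c) (INR (S N') * INR (S N') * amax * Bnd (S N') s amax)); auto.
    + pose proof (Bnd_nonneg _ _ _ _ _ H ltac:(lia)). pose proof (st_ab _ _ _ _ _ H 0 0 0 (Rle_refl 0)).
      pose proof (pos_INR (S N')). apply Rmult_le_pos; [|auto]. apply Rmult_le_pos; [nra|lra].
    + intros a b Hab. apply (local_step _ _ _ _ _ H). lra.
Qed.

Definition negx (x : nat -> R -> R) := fun i t => - x i t.

Lemma rhs_neg N s alpha x i : (forall j, (j < N)%nat -> 0 <= s j) -> (i < N)%nat ->
  rhs N alpha s (negx x) i = (fun t => fct_cte 0 t + -1 * rhs N alpha s x i t).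
Proof.
  intros Hs Hi. apply functional_extensionality. intros t. unfold rhs, negx, fct_cte.
  rewrite <- sumN_scal. rewrite <- (Rplus_0_l (sumN _ _)) at 1. f_equal. apply sumN_ext. intros j Hj.
  rewrite !sat_opp by auto. ring.
Qed.

Lemma setting_neg N s alpha amax x : Setting N s alpha amax x -> Setting N s alpha amax (negx x).
Proof.
  intros H. destruct H as [H1 H2 H3 H4 H5]. split; auto.
  intros i Hi a b Hab. rewrite rhs_neg; [|intros; apply Rlt_le; auto|auto].
  destruct (H5 i Hi a b Hab) as [pr E].
  exists (RiemannInt_P10 (-1) (RiemannInt_P14 a b 0) pr).
  rewrite (RiemannInt_P13 (RiemannInt_P14 a b 0) pr (RiemannInt_P10 (-1) (RiemannInt_P14 a b 0) pr)).
  rewrite RiemannInt_P15, E. unfold negx. ring.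
Qed.

Lemma int_zero f a b (pr : Riemann_integrable f a b) : a <= b -> (forall t, a < t < b -> f t = 0) -> RiemannInt pr = 0.
Proof. intros Hab H. rewrite (RiemannInt_P18 pr (RiemannInt_P14 a b 0)); auto.
  rewrite RiemannInt_P15. ring. Qed.

Lemma conservation N s alpha amax x (H : Setting N s alpha amax x) t : 0 <= t ->
  sumN N (fun i => x i t) = sumN N (fun i => x i 0).
Proof.
  intros Ht. destruct (comb_IR _ _ _ _ _ H (fun _ => 1) 0 t ltac:(lra) N (le_n N)) as [pr E].
  rewrite int_zero in E; auto.
  - assert (sumN N (fun i => 1 * (x i t - x i 0)) = sumN N (fun i => x i t) - sumN N (fun i => x i 0))
      by (rewrite <- sumN_minus; apply sumN_ext; intros; ring). lra.
  - intros u Hu. rewrite (flux_identity _ _ _ _ _ H) by lra.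
    rewrite (sumN_ext _ _ (fun _ => 0)). rewrite sumN_zero; ring.
    intros i Hi. rewrite (sumN_ext _ _ (fun _ => 0)). apply sumN_zero. intros; ring.
Qed.

Lemma gl_nonneg s c x : -s <= c -> 0 <= gl s c x.
Proof. intros. unfold gl, Rmax. repeat destruct Rlt_dec; repeat destruct Rle_dec; lra. Qed.

Lemma gl_le0 s c x : 0 < s -> -s <= c -> gl s c x <= 0 -> sat s x <= c.
Proof. intros Hs Hc. unfold gl, Rmax. destruct (sat_spec s x ltac:(lra)) as [[? ->]|[[? ->]|[? ->]]];
  repeat destruct Rlt_dec; repeat destruct Rle_dec; lra. Qed.

Lemma gl_zero s c x : 0 < s -> sat s x <= c -> gl s c x = 0.
Proof. intros Hs. unfold gl, Rmax. destruct (sat_spec s x ltac:(lra)) as [[? ->]|[[? ->]|[? ->]]];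
  repeat destruct Rlt_dec; repeat destruct Rle_dec; lra. Qed.

Lemma gl_abs s c x : Rabs (gl s c x) <= Rabs x + Rabs c.
Proof. unfold gl, Rmax, Rabs. repeat destruct Rlt_dec; repeat destruct Rle_dec; repeat destruct Rcase_abs; lra. Qed.

Lemma gl_zero_c s x : 0 < s -> gl s 0 x = Rmax x 0.
Proof. intros. unfold gl. repeat destruct Rlt_dec; try lra. f_equal. ring. Qed.

Definition Xb N s x := Fl N s x 0 0 + Fl N s (negx x) 0 0.

Lemma x_bound N s alpha amax x (H : Setting N s alpha amax x) i t : (i < N)%nat -> 0 <= t ->
  Rabs (x i t) <= Xb N s x.
Proof.
  intros Hi Ht. unfold Xb.
  assert (P : forall y, Setting N s alpha amax y -> y i t <= Fl N s y 0 0 /\ 0 <= Fl N s y 0 0).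
  { intros y Hy. pose proof (Fl_mono _ _ _ _ _ Hy 0 0 t (Rle_refl 0) Ht).
    assert (Hnn : forall u, 0 <= Fl N s y 0 u).
    { intros u. apply sumN_nonneg. intros k Hk. apply gl_nonneg. pose proof (st_spos _ _ _ _ _ Hy k Hk). lra. }
    split; [|apply Hnn].
    assert (gl (s i) 0 (y i t) <= Fl N s y 0 t).
    { apply (sumN_ge_term N (fun k => gl (s k) 0 (y k t))); auto.
      intros k Hk. apply gl_nonneg. pose proof (st_spos _ _ _ _ _ Hy k Hk). lra. }
    rewrite gl_zero_c in H1 by (apply (st_spos _ _ _ _ _ Hy i Hi)).
    pose proof (Rmax_l (y i t) 0). lra. }
  destruct (P x H). destruct (P (negx x) (setting_neg _ _ _ _ _ H)). unfold negx at 1 in H2.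
  unfold Rabs; destruct Rcase_abs; lra.
Qed.

Lemma mono_conv (f : R -> R) lb : (forall t u, 0 <= t -> t <= u -> f u <= f t) ->
  (forall t, 0 <= t -> lb <= f t) -> { l | lim_infty f l /\ (forall t, 0 <= t -> l <= f t) }.
Proof.
  intros Hm Hb. set (E := fun v => exists t, 0 <= t /\ v = - f t).
  assert (HE : bound E). { exists (- lb). intros v [t [Ht ->]]. specialize (Hb t Ht). lra. }
  assert (HE2 : exists v, E v) by (exists (- f 0); exists 0; split; [lra|auto]).
  destruct (completeness E HE HE2) as [m [Hub Hlub]].
  exists (- m). split.
  - intros eps Heps. destruct (classic (exists t, 0 <= t /\ m - eps < - f t)) as [[t0 [Ht0 Hlt]]|Hno].
    + exists t0. intros t Ht. assert (- f t <= m) by (apply Hub; exists t; split; [lra|auto]).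
      pose proof (Hm t0 t Ht0 Ht). unfold Rabs; destruct Rcase_abs; lra.
    + exfalso. assert (m <= m - eps); [|lra]. apply Hlub. intros v [t [Ht ->]].
      destruct (Rle_dec (- f t) (m - eps)); auto. exfalso. apply Hno. exists t. split; auto. lra.
  - intros t Ht. assert (- f t <= m) by (apply Hub; exists t; split; auto). lra.
Qed.

Fixpoint maxN (n : nat) (f : nat -> R) : R :=
  match n with O => f O | S m => Rmax (maxN m f) (f m) end.

Lemma maxN_ge n f k : (k < n)%nat -> f k <= maxN n f.
Proof. induction n; simpl; intros Hk; [lia|]. destruct (Nat.eq_dec k n).
  - subst. apply Rmax_r. - eapply Rle_trans; [apply IHn; lia|apply Rmax_l]. Qed.

Lemma maxN_attained n f : exists k, (k < n \/ k = 0)%nat /\ maxN n f = f k.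
Proof. induction n; simpl. - exists 0%nat; auto.
  - destruct IHn as [k [Hk E]]. unfold Rmax. destruct Rle_dec.
    + exists n; split; [lia|auto]. + exists k; split; [lia|auto]. Qed.

Definition Mx N s x t := maxN N (fun i => yv s x i t).

Lemma Mx_ge N s x i t : (i < N)%nat -> yv s x i t <= Mx N s x t.
Proof. intros. unfold Mx. apply (maxN_ge N (fun i => yv s x i t)); auto. Qed.

Lemma Mx_mono N s alpha amax x (H : Setting N s alpha amax x) t u : (0 < N)%nat -> 0 <= t -> t <= u ->
  Mx N s x u <= Mx N s x t.
Proof.
  intros HN Ht Htu. set (c := Mx N s x t).
  assert (Hc : forall i, (i < N)%nat -> - s i <= c).
  { intros i Hi. pose proof (Mx_ge N s x i t Hi). pose proof (sat_bound (s i) (x i t) (Rlt_le _ _ (st_spos _ _ _ _ _ H i Hi))).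
    unfold yv in *. fold c in H0. lra. }
  assert (F0 : Fl N s x c t = 0).
  { unfold Fl. rewrite (sumN_ext _ _ (fun _ => 0)); [apply sumN_zero|]. intros i Hi.
    apply gl_zero; [apply (st_spos _ _ _ _ _ H i Hi)|]. apply (Mx_ge N s x i t Hi). }
  pose proof (Fl_mono _ _ _ _ _ H c t u Ht Htu) as Hm. rewrite F0 in Hm.
  destruct (maxN_attained N (fun i => yv s x i u)) as [k [Hk E]].
  assert (Hk' : (k < N)%nat) by lia.
  unfold Mx. rewrite E. apply gl_le0; [apply (st_spos _ _ _ _ _ H k Hk')|apply Hc; auto|].
  eapply Rle_trans; [apply (sumN_ge_term N (fun i => gl (s i) c (x i u))); auto|apply Hm].
  intros i Hi. apply gl_nonneg. apply Hc; auto.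
Qed.

Lemma Mx_lb N s alpha amax x (H : Setting N s alpha amax x) t : (0 < N)%nat -> - s 0%nat <= Mx N s x t.
Proof. intros HN. eapply Rle_trans; [|apply (Mx_ge N s x 0 t HN)]. unfold yv.
  apply sat_bound. apply Rlt_le, (st_spos _ _ _ _ _ H 0%nat HN). Qed.

Lemma nat_gt (r : R) : exists n : nat, r < INR n /\ (0 < n)%nat.
Proof.
  destruct (archimed (Rabs r)) as [Ha _]. exists (S (Z.to_nat (up (Rabs r)))). split; [|lia].
  rewrite S_INR, INR_IZR_INZ, Z2Nat.id.
  - pose proof (Rle_abs r). lra.
  - apply le_IZR. simpl. pose proof (Rabs_pos r). lra.
Qed.

Lemma avoid_point a b p : a < b -> exists a' b', (a <= a' /\ a' < b' /\ b' <= b) /\ ~ (a' <= p <= b').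
Proof. intros Hab. destruct (Rle_dec p ((a+b)/2)).
  - exists ((3*a+5*b)/8), b. split; [repeat split; lra|]. lra.
  - exists a, ((a+b)/2). split; [repeat split; lra|]. lra. Qed.

Lemma free_interval (s : nat -> R) n a b : a < b -> exists a' b', (a <= a' /\ a' < b' /\ b' <= b) /\
  forall k, (k < n)%nat -> ~ (a' <= s k <= b') /\ ~ (a' <= - s k <= b').
Proof.
  intros Hab. induction n.
  - exists a, b. split; [repeat split; lra|]. intros; lia.
  - destruct IHn as [a1 [b1 [H1 H2]]].
    destruct (avoid_point a1 b1 (s n) ltac:(lra)) as [a2 [b2 [H3 H4]]].
    destruct (avoid_point a2 b2 (- s n) ltac:(lra)) as [a3 [b3 [H5 H6]]].
    exists a3, b3. split; [repeat split; lra|]. intros k Hk. destruct (Nat.eq_dec k n).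
    + subst. split; lra.
    + destruct (H2 k ltac:(lia)). split; lra.
Qed.

Definition tent (d c y : R) := Rmax 0 (d - Rabs (y - c)).

Lemma tent_identity s a b c d x : 0 < s -> 0 < d -> a <= c - d -> c + d <= b ->
  ~ (a <= s <= b) -> ~ (a <= - s <= b) ->
  gl s (c - d) x - 2 * gl s c x + gl s (c + d) x = tent d c (sat s x).
Proof.
  intros Hs Hd H1 H2 H3 H4.
  assert (Cl : c + d < - s \/ (- s < c - d /\ c + d < s) \/ s < c - d) by lra.
  unfold gl, tent, Rmax. destruct (sat_spec s x ltac:(lra)) as [[? ->]|[[? ->]|[? ->]]];
  destruct Cl as [Cl|[Cl|Cl]];
  repeat destruct Rlt_dec; repeat destruct Rle_dec; unfold Rabs in *; repeat destruct Rcase_abs; lra.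
Qed.

Lemma tent_nonneg d c y : 0 <= tent d c y.
Proof. apply Rmax_l. Qed.

Lemma tent_zero_above a d y K : 0 < d -> a + 2 * INR K * d <= y ->
  sumN K (fun k => tent d (a + (2 * INR k + 1) * d) y) = 0.
Proof.
  intros Hd. induction K; intros Hy; simpl; [auto|].
  rewrite S_INR in Hy. rewrite IHK by (pose proof (pos_INR K); nra).
  unfold tent, Rmax, Rabs. destruct Rcase_abs; destruct Rle_dec; lra.
Qed.

Lemma tent_sum_le a d y K : 0 < d -> sumN K (fun k => tent d (a + (2 * INR k + 1) * d) y) <= d.
Proof.
  intros Hd. induction K; simpl; [lra|].
  destruct (Rlt_dec 0 (tent d (a + (2 * INR K + 1) * d) y)) as [Hp|Hp].
  - rewrite tent_zero_above; auto.
    + pose proof (Rabs_pos (y - (a + (2 * INR K + 1) * d))). unfold tent, Rmax. destruct Rle_dec; lra.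
    + unfold tent, Rmax in Hp. destruct Rle_dec; [|lra]. unfold Rabs in *; destruct Rcase_abs; lra.
  - pose proof (tent_nonneg d (a + (2 * INR K + 1) * d) y). lra.
Qed.

Lemma lim_lin f g a b k : lim_infty f a -> lim_infty g b -> lim_infty (fun t => f t + k * g t) (a + k * b).
Proof.
  intros Hf Hg eps Heps.
  destruct (Hf (eps / 2 / (1 + Rabs k))) as [T1 H1]. { apply Rdiv_lt_0_compat; [lra|]. pose proof (Rabs_pos k); lra. }
  destruct (Hg (eps / 2 / (1 + Rabs k))) as [T2 H2]. { apply Rdiv_lt_0_compat; [lra|]. pose proof (Rabs_pos k); lra. }
  exists (Rmax T1 T2). intros t Ht. specialize (H1 t ltac:(pose proof (Rmax_l T1 T2); lra)).
  specialize (H2 t ltac:(pose proof (Rmax_r T1 T2); lra)).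
  replace (f t + k * g t - (a + k * b)) with ((f t - a) + k * (g t - b)) by ring.
  eapply Rle_lt_trans; [apply Rabs_triang|]. rewrite Rabs_mult.
  assert (0 <= Rabs k) by apply Rabs_pos.
  assert (eps / 2 / (1 + Rabs k) * (1 + Rabs k) = eps / 2) by (field; lra).
  assert (Rabs k * Rabs (g t - b) <= Rabs k * (eps / 2 / (1 + Rabs k))) by (apply Rmult_le_compat_l; lra).
  assert (Rabs k * (eps / 2 / (1 + Rabs k)) <= (1 + Rabs k) * (eps / 2 / (1 + Rabs k))).
  { apply Rmult_le_compat_r; [|lra]. apply Rlt_le, Rdiv_lt_0_compat; lra. }
  nra.
Qed.

Lemma lim_ext f g l : (forall t, 0 <= t -> f t = g t) -> lim_infty f l -> lim_infty g l.
Proof. intros E Hf eps Heps. destruct (Hf eps Heps) as [T HT]. exists (Rmax T 0). intros t Ht.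
  rewrite <- E by (pose proof (Rmax_r T 0); lra). apply HT. pose proof (Rmax_l T 0); lra. Qed.

Lemma lim_const c : lim_infty (fun _ => c) c.
Proof. intros eps Heps. exists 0. intros. rewrite Rminus_diag, Rabs_R0. auto. Qed.

Lemma lim_sum K (F : nat -> R -> R) (L : nat -> R) : (forall k, (k < K)%nat -> lim_infty (F k) (L k)) ->
  lim_infty (fun t => sumN K (fun k => F k t)) (sumN K L).
Proof.
  induction K; intros H; simpl.
  - apply lim_const.
  - replace (sumN K L + L K) with (sumN K L + 1 * L K) by ring.
    eapply lim_ext; [|apply lim_lin; [apply IHK; intros; apply H; lia|apply (H K); lia]].
    intros; simpl; ring.
Qed.

Lemma lim_le f l C : (forall t, 0 <= t -> f t <= C) -> lim_infty f l -> l <= C.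
Proof. intros H Hf. destruct (Rle_dec l C); auto. exfalso. destruct (Hf (l - C) ltac:(lra)) as [T HT].
  specialize (HT (Rmax T 0) (Rmax_l T 0)). specialize (H (Rmax T 0) (Rmax_r T 0)).
  unfold Rabs in HT; destruct Rcase_abs; lra. Qed.

Lemma lim_io f l v : (forall T, exists t, T <= t /\ v <= f t) -> lim_infty f l -> v <= l.
Proof. intros H Hf. destruct (Rle_dec v l); auto. exfalso. destruct (Hf (v - l) ltac:(lra)) as [T HT].
  destruct (H T) as [t [Ht Hv]]. specialize (HT t Ht). unfold Rabs in HT; destruct Rcase_abs; lra. Qed.

Lemma no_cross (f : R -> R) B T0 c rho : 0 < rho -> 0 <= B ->
  (forall u v, T0 <= v <= u -> Rabs (f u - f v) <= B * (u - v)) ->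
  (forall t, T0 <= t -> rho <= Rabs (f t - c)) ->
  forall t, T0 <= t -> (c < f t <-> c < f T0).
Proof.
  intros Hr HB Hl Hc t Ht.
  destruct (nat_gt (B * (t - T0) / rho)) as [n [Hn Hn0]].
  assert (HnR : 0 < INR n) by (apply lt_0_INR; auto).
  set (h := (t - T0) / INR n).
  assert (Hh : 0 <= h) by (unfold h; apply Rmult_le_pos; [lra|apply Rlt_le, Rinv_0_lt_compat; lra]).
  assert (Bh : B * h < 2 * rho).
  { unfold h. assert (B * ((t - T0) / INR n) = B * (t - T0) / rho * rho / INR n) by (field; lra).
    rewrite H. apply (Rmult_lt_reg_r (INR n)); auto. unfold Rdiv. rewrite Rmult_assoc, Rinv_l by lra.
    apply (Rmult_lt_compat_r rho) in Hn; auto. unfold Rdiv in Hn. nra. }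
  assert (Step : forall k, (c < f (T0 + INR k * h) <-> c < f T0)).
  { induction k.
    - simpl. replace (T0 + 0 * h) with T0 by ring. tauto.
    - rewrite S_INR. assert (0 <= INR k) by apply pos_INR.
      pose proof (Hl (T0 + (INR k + 1) * h) (T0 + INR k * h) ltac:(split; nra)) as L.
      replace (T0 + (INR k + 1) * h - (T0 + INR k * h)) with h in L by ring.
      pose proof (Hc (T0 + (INR k + 1) * h) ltac:(nra)). pose proof (Hc (T0 + INR k * h) ltac:(nra)).
      revert L H0 H1 IHk. generalize (f (T0 + (INR k + 1) * h)) (f (T0 + INR k * h)).
      intros u v L H0 H1 IHk. unfold Rabs in *. repeat destruct Rcase_abs; split; intros; try tauto;
      try (apply IHk; lra); try (destruct IHk; lra); try (exfalso; nra); try lra.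
      all: destruct IHk as [I1 I2]; try (specialize (I1 ltac:(lra))); try (specialize (I2 ltac:(lra))); nra. }
  specialize (Step n). replace (T0 + INR n * h) with t in Step by (unfold h; field; lra). auto.
Qed.

Lemma cross (E : nat -> nat -> Prop) (P : nat -> Prop) a b : connected_by E a b -> P a -> ~ P b ->
  exists u v, E u v /\ P u /\ ~ P v.
Proof. induction 1; intros Pa Pb; [tauto|]. destruct (classic (P y)).
  - apply IHconnected_by; auto. - exists x, y; auto. Qed.

Lemma Xb_nonneg N s alpha amax x (H : Setting N s alpha amax x) : (0 < N)%nat -> 0 <= Xb N s x.
Proof. intros HN. pose proof (x_bound _ _ _ _ _ H 0 0 HN (Rle_refl 0)). pose proof (Rabs_pos (x 0%nat 0)). lra. Qed.

Lemma Fl_conv N s alpha amax x (H : Setting N s alpha amax x) c : {l | lim_infty (Fl N s x c) l}.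
Proof.
  destruct (mono_conv (Fl N s x c) (- (INR N * (Xb N s x + Rabs c)))) as [l [Hl _]].
  - intros t u Ht Htu. apply (Fl_mono _ _ _ _ _ H); auto.
  - intros t Ht. assert (Rabs (Fl N s x c t) <= INR N * (Xb N s x + Rabs c)); [|apply Rabs_le_inv in H0; lra].
    unfold Fl. apply sumN_abs_le. intros k Hk. eapply Rle_trans; [apply gl_abs|].
    pose proof (x_bound _ _ _ _ _ H k t Hk Ht). lra.
  - exists l; auto.
Qed.

Lemma flux_cut N s alpha amax x (H : Setting N s alpha amax x) (d : nat -> R) c rho i j t : 0 <= t -> 0 < rho ->
  (forall l, (l < N)%nat -> (d l = 1 /\ c + rho <= yv s x l t) \/ (d l = 0 /\ yv s x l t <= c - rho)) ->
  (i < N)%nat -> (j < N)%nat -> d i = 1 -> d j = 0 ->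
  sumN N (fun l => d l * rhs N alpha s x l t) <= - (2 * rho) * alpha i j t.
Proof.
  intros Ht Hr Q Hi Hj Hdi Hdj. rewrite (flux_identity _ _ _ _ _ H d t Ht).
  set (e := fun k l => alpha k l t * ((d k - d l) * (yv s x k t - yv s x l t))).
  assert (He : forall k l, (k < N)%nat -> (l < N)%nat -> 0 <= e k l).
  { intros k l Hk Hl. unfold e. destruct (st_ab _ _ _ _ _ H k l t Ht).
    apply Rmult_le_pos; auto. destruct (Q k Hk) as [[-> ?]|[-> ?]]; destruct (Q l Hl) as [[-> ?]|[-> ?]]; nra. }
  assert (Eij : 2 * rho * alpha i j t <= e i j).
  { unfold e. destruct (st_ab _ _ _ _ _ H i j t Ht). destruct (Q i Hi) as [[_ ?]|[? _]]; [|lra].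
    destruct (Q j Hj) as [[? _]|[_ ?]]; [lra|]. rewrite Hdi, Hdj. nra. }
  assert (Eji : 2 * rho * alpha i j t <= e j i).
  { unfold e. rewrite (st_sym _ _ _ _ _ H j i t Ht). destruct (st_ab _ _ _ _ _ H i j t Ht). destruct (Q i Hi) as [[_ ?]|[? _]]; [|lra].
    destruct (Q j Hj) as [[? _]|[_ ?]]; [lra|]. rewrite Hdi, Hdj. nra. }
  assert (Hij : i <> j) by (intro; subst; lra).
  assert (Rows : forall k, (k < N)%nat -> 0 <= sumN N (fun l => e k l)) by (intros; apply sumN_nonneg; intros; apply He; auto).
  pose proof (sumN_ge_two N (fun k => sumN N (fun l => e k l)) i j Rows Hi Hj Hij).
  pose proof (sumN_ge_term N (fun l => e i l) j (fun l Hl => He i l Hi Hl) Hj).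
  pose proof (sumN_ge_term N (fun l => e j l) i (fun l Hl => He j l Hj Hl) Hi).
  change (- / 2 * sumN N (fun k => sumN N (fun l => e k l)) <= - (2 * rho) * alpha i j t). lra.
Qed.

Lemma flux_integral N s alpha amax x (H : Setting N s alpha amax x) (d : nat -> R) c rho i j T0 :
  0 <= T0 -> 0 < rho ->
  (forall l t, (l < N)%nat -> T0 <= t -> (d l = 1 /\ c + rho <= yv s x l t) \/ (d l = 0 /\ yv s x l t <= c - rho)) ->
  (i < N)%nat -> (j < N)%nat -> d i = 1 -> d j = 0 ->
  forall a b (pra : Riemann_integrable (alpha i j) a b), T0 <= a <= b ->
  sumN N (fun l => d l * (x l b - x l a)) <= - (2 * rho) * RiemannInt pra.
Proof.
  intros HT0 Hr Q Hi Hj Hdi Hdj a b pra Hab.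
  destruct (comb_IR _ _ _ _ _ H d a b ltac:(lra) N (le_n N)) as [pr E]. rewrite <- E.
  pose (pr2 := RiemannInt_P10 (- (2 * rho)) (RiemannInt_P14 a b 0) pra).
  assert (RiemannInt pr <= RiemannInt pr2).
  { apply RiemannInt_P19; [lra|]. intros t Ht. unfold fct_cte. rewrite Rplus_0_l.
    apply (flux_cut _ _ _ _ _ H d c rho i j t); auto; try lra. intros l Hl. apply Q; auto; lra. }
  unfold pr2 in H0. rewrite (RiemannInt_P13 (RiemannInt_P14 a b 0) pra) in H0.
  rewrite RiemannInt_P15 in H0. lra.
Qed.

Lemma int_upper N s alpha amax x (H : Setting N s alpha amax x) i j a b (pr : Riemann_integrable (alpha i j) a b) :
  0 <= a <= b -> RiemannInt pr <= amax * (b - a).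
Proof. intros Hab. apply int_le_const; [lra|]. intros t Ht. apply (st_ab _ _ _ _ _ H i j t). lra. Qed.

Lemma consensus N s alpha amax x (H : Setting N s alpha amax x) (HN : (0 < N)%nat)
  (Hconn : integrally_connected N alpha) L1 L2
  (HL1 : forall t, 0 <= t -> L1 <= Mx N s x t)
  (HL2 : forall t, 0 <= t -> L2 <= Mx N s (negx x) t) : L1 + L2 <= 0.
Proof.
  destruct (Rle_dec (L1 + L2) 0) as [|Hc]; auto. exfalso.
  destruct (free_interval s N (- L2) L1 ltac:(lra)) as [a' [b' [[Ha1 [Ha2 Ha3]] Hfree]]].
  set (K := (2 * N + 1)%nat).
  assert (HK : INR K = 2 * INR N + 1) by (unfold K; rewrite plus_INR, mult_INR; simpl; ring).
  set (d := (b' - a') / (2 * INR K)).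
  assert (Hd : 0 < d) by (unfold d; apply Rdiv_lt_0_compat; [lra|]; pose proof (pos_INR N); lra).
  assert (HdK : 2 * INR K * d = b' - a') by (unfold d; field; pose proof (pos_INR N); lra).
  set (cen := fun k => a' + (2 * INR k + 1) * d).
  assert (Hcen : forall k, (k < K)%nat -> a' <= cen k - d /\ cen k + d <= b').
  { intros k Hk. assert (INR k + 1 <= INR K) by (rewrite <- S_INR; apply le_INR; lia).
    pose proof (pos_INR k). unfold cen. split; nra. }
  set (FL := fun c => proj1_sig (Fl_conv _ _ _ _ _ H c)).
  assert (HFL : forall c, lim_infty (Fl N s x c) (FL c)) by (intros c; unfold FL; destruct (Fl_conv _ _ _ _ _ H c); auto).
  set (Del := fun k t => Fl N s x (cen k - d) t + (-2) * Fl N s x (cen k) t + 1 * Fl N s x (cen k + d) t).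
  set (LD := fun k => FL (cen k - d) + (-2) * FL (cen k) + 1 * FL (cen k + d)).
  assert (HLD : forall k, lim_infty (Del k) (LD k)).
  { intros k. unfold Del, LD. apply lim_lin; [apply lim_lin|]; apply HFL. }
  assert (Dtent : forall k t, (k < K)%nat -> 0 <= t -> Del k t = sumN N (fun i => tent d (cen k) (yv s x i t))).
  { intros k t Hk Ht. unfold Del, Fl. rewrite <- !sumN_scal, <- !sumN_plus. apply sumN_ext. intros i Hi.
    destruct (Hcen k Hk). destruct (Hfree i Hi).
    unfold yv. rewrite <- (tent_identity (s i) a' b' (cen k) d (x i t)); auto; [ring|apply (st_spos _ _ _ _ _ H i Hi)]. }
  assert (Sum_le : forall t, 0 <= t -> sumN K (fun k => Del k t) <= INR N * d).
  { intros t Ht. rewrite (sumN_ext K _ (fun k => sumN N (fun i => tent d (cen k) (yv s x i t)))) by (intros; apply Dtent; auto).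
    rewrite sumN_swap. rewrite <- sumN_const. apply sumN_le. intros i Hi. apply tent_sum_le; auto. }
  assert (LSum : sumN K LD <= INR N * d).
  { apply (lim_le (fun t => sumN K (fun k => Del k t))); auto. apply lim_sum. intros; apply HLD. }
  set (nonclear := fun k => forall T, exists t, T <= t /\ exists i, (i < N)%nat /\ Rabs (yv s x i t - cen k) < d / 2).
  assert (Hclear : exists k, (k < K)%nat /\ ~ nonclear k).
  { apply NNPP. intros Hno.
    assert (Hall : forall k, (k < K)%nat -> d / 2 <= LD k).
    { intros k Hk. assert (Hnc : nonclear k) by (apply NNPP; intro; apply Hno; exists k; auto).
      apply (lim_io (Del k)); [|apply HLD]. intros T. destruct (Hnc (Rmax T 0)) as [t [Ht [i [Hi Hy]]]].
      exists t. split; [pose proof (Rmax_l T 0); lra|].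
      assert (Ht0 : 0 <= t) by (pose proof (Rmax_r T 0); lra).
      rewrite Dtent; auto. eapply Rle_trans; [|apply (sumN_ge_term N (fun i => tent d (cen k) (yv s x i t)) i); auto].
      - unfold tent. eapply Rle_trans; [|apply Rmax_r]. lra.
      - intros; apply tent_nonneg. }
    pose proof (sumN_lower K LD (d / 2) Hall). rewrite HK in H0. nra. }
  destruct Hclear as [k [Hk Hcl]].
  assert (Hcl2 : exists T, forall t, T <= t -> forall i, (i < N)%nat -> d / 2 <= Rabs (yv s x i t - cen k)).
  { apply NNPP. intro Hn. apply Hcl. intros T. apply NNPP. intro Hn2. apply Hn. exists T. intros t Ht i Hi.
    destruct (Rle_dec (d / 2) (Rabs (yv s x i t - cen k))) as [|Hlt]; auto. exfalso. apply Hn2.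
    exists t. split; auto. exists i. split; auto. lra. }
  destruct Hcl2 as [T HT]. set (T0 := Rmax T 0). assert (HT0 : 0 <= T0) by apply Rmax_r.
  assert (HTT : T <= T0) by apply Rmax_l.
  set (c := cen k). destruct (Hcen k Hk) as [Hc1 Hc2]. fold c in Hc1, Hc2.
  assert (NC : forall i t, (i < N)%nat -> T0 <= t -> (c < yv s x i t <-> c < yv s x i T0)).
  { intros i t Hi Ht.
    assert (B0 : 0 <= Bnd N s amax) by apply (Bnd_nonneg _ _ _ _ _ H HN).
    assert (L : forall u v, T0 <= v <= u -> Rabs (yv s x i u - yv s x i v) <= Bnd N s amax * (u - v))
      by (intros u v Huv; apply (y_lip _ _ _ _ _ H); auto; lra).
    assert (C : forall t', T0 <= t' -> d / 2 <= Rabs (yv s x i t' - c)) by (intros t' Ht'; apply HT; auto; lra).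
    exact (no_cross (yv s x i) (Bnd N s amax) T0 c (d / 2) ltac:(lra) B0 L C t Ht). }
  destruct (maxN_attained N (fun i => yv s x i T0)) as [k1 [Hk1 E1]].
  assert (Hk1' : (k1 < N)%nat) by lia.
  assert (Up : c < yv s x k1 T0). { pose proof (HL1 T0 HT0). unfold Mx in H0. rewrite E1 in H0. lra. }
  destruct (maxN_attained N (fun i => yv s (negx x) i T0)) as [j1 [Hj1 E2]].
  assert (Hj1' : (j1 < N)%nat) by lia.
  assert (Dn : ~ c < yv s x j1 T0).
  { pose proof (HL2 T0 HT0). unfold Mx in H0. rewrite E2 in H0. unfold yv, negx in H0.
    rewrite sat_opp in H0 by (apply Rlt_le, (st_spos _ _ _ _ _ H j1 Hj1')). unfold yv. lra. }
  destruct (cross _ (fun i => c < yv s x i T0) k1 j1 (Hconn k1 j1 Hk1' Hj1') Up Dn) as [i [j [[Hi [Hj Hinf]] [Pi Pj]]]].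
  set (dd := fun l => indc c (yv s x l T0)).
  assert (Q : forall l t, (l < N)%nat -> T0 <= t ->
    (dd l = 1 /\ c + d / 2 <= yv s x l t) \/ (dd l = 0 /\ yv s x l t <= c - d / 2)).
  { intros l t Hl Ht. pose proof (HT t ltac:(lra) l Hl). fold c in H0. pose proof (NC l t Hl Ht).
    unfold dd, indc. destruct Rlt_dec as [Hlt|Hlt].
    - left. split; auto. assert (c < yv s x l t) by tauto. unfold Rabs in H0; destruct Rcase_abs; lra.
    - right. split; auto. assert (~ c < yv s x l t) by tauto. unfold Rabs in H0; destruct Rcase_abs; lra. }
  assert (Hdi : dd i = 1) by (unfold dd, indc; destruct Rlt_dec; tauto).
  assert (Hdj : dd j = 0) by (unfold dd, indc; destruct Rlt_dec; tauto).
  set (Xm := Xb N s x). assert (HXm : 0 <= Xm) by (apply (Xb_nonneg _ _ _ _ _ H HN)).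
  destruct (Hinf (amax * T0 + (2 * INR N * Xm + 1) / d)) as [T1 [HT1 [pr1 Hpr1]]].
  assert (Hamax : 0 <= amax) by (destruct (st_ab _ _ _ _ _ H 0 0 0 (Rle_refl 0)); lra).
  assert (Hq : 0 <= (2 * INR N * Xm + 1) / d) by (apply Rlt_le, Rdiv_lt_0_compat; [pose proof (pos_INR N); nra|lra]).
  assert (HT01 : T0 <= T1).
  { destruct (Rle_dec T0 T1); auto. pose proof (int_upper _ _ _ _ _ H i j 0 T1 pr1 ltac:(lra)). nra. }
  pose (pra := RiemannInt_P22 pr1 (conj HT0 HT01)).
  pose (prb := RiemannInt_P23 pr1 (conj HT0 HT01)).
  pose proof (RiemannInt_P25 pra prb pr1 HT0 HT01) as Split.
  pose proof (int_upper _ _ _ _ _ H i j 0 T0 pra ltac:(lra)) as Ua.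
  pose proof (flux_integral _ _ _ _ _ H dd c (d / 2) i j T0 HT0 ltac:(lra) Q Hi Hj Hdi Hdj T0 T1 prb ltac:(lra)) as Fx.
  assert (Bd : - (INR N * (2 * Xm)) <= sumN N (fun l => dd l * (x l T1 - x l T0))).
  { assert (Rabs (sumN N (fun l => dd l * (x l T1 - x l T0))) <= INR N * (2 * Xm)); [|apply Rabs_le_inv in H0; lra].
    apply sumN_abs_le. intros l Hl. rewrite Rabs_mult.
    assert (Rabs (dd l) <= 1) by (unfold dd, indc; destruct Rlt_dec; rewrite ?Rabs_R1, ?Rabs_R0; lra).
    pose proof (x_bound _ _ _ _ _ H l T1 Hl ltac:(lra)). pose proof (x_bound _ _ _ _ _ H l T0 Hl HT0).
    assert (Rabs (x l T1 - x l T0) <= 2 * Xm) by (unfold Rminus; eapply Rle_trans; [apply Rabs_triang|]; rewrite Rabs_Ropp; unfold Xm; lra).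
    replace (2 * Xm) with (1 * (2 * Xm)) by ring. apply Rmult_le_compat; auto using Rabs_pos. }
  assert (RiemannInt prb > (2 * INR N * Xm + 1) / d) by lra.
  assert (d / 2 * ((2 * INR N * Xm + 1) / d) = (2 * INR N * Xm + 1) / 2) by (field; lra).
  assert (- (2 * (d / 2)) * RiemannInt prb < - (2 * (d / 2)) * ((2 * INR N * Xm + 1) / d)).
  { apply Rmult_lt_gt_compat_neg_l; lra. }
  nra.
Qed.

Lemma s_dec_gen N s : (forall i, (S i < N)%nat -> s (S i) < s i) ->
  forall i j, (i < j)%nat -> (j < N)%nat -> s j < s i.
Proof. intros H i j Hij. induction Hij; intros Hj. - apply H; auto.
  - assert (s (S m) < s m) by (apply H; auto). assert (s m < s i) by (apply IHHij; lia). lra. Qed.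

Lemma yv_neg s x i t : 0 <= s i -> yv s (negx x) i t = - yv s x i t.
Proof. intros. unfold yv, negx. apply sat_opp; auto. Qed.

Lemma y_conv N s x L1 L2 i : (i < N)%nat -> lim_infty (Mx N s x) L1 -> lim_infty (Mx N s (negx x)) L2 ->
  (forall j (t : R), (j < N)%nat -> 0 <= s j) -> L1 + L2 = 0 -> lim_infty (yv s x i) L1.
Proof.
  intros Hi H1 H2 Hs E eps Heps. destruct (H1 eps Heps) as [T1 HT1]. destruct (H2 eps Heps) as [T2 HT2].
  exists (Rmax T1 T2). intros t Ht. specialize (HT1 t ltac:(pose proof (Rmax_l T1 T2); lra)).
  specialize (HT2 t ltac:(pose proof (Rmax_r T1 T2); lra)).
  pose proof (Mx_ge N s x i t Hi). pose proof (Mx_ge N s (negx x) i t Hi).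
  rewrite yv_neg in H0 by (apply (Hs i t); auto).
  unfold Rabs in *. repeat destruct Rcase_abs; lra.
Qed.

Theorem lemma8 (N : nat) (s : nat -> R) (alpha : nat -> nat -> R -> R)
  (amin amax : R) (x : nat -> R -> R)
  (Hs_dec : forall i, (S i < N)%nat -> s (S i) < s i)
  (Hs_pos : 0 < s (pred N))
  (Hsym : forall i j t, 0 <= t -> alpha i j t = alpha j i t)
  (Hamin : 0 < amin) (Hamm : amin <= amax)
  (Hvals : forall i j t, 0 <= t ->
     alpha i j t = 0 \/ (amin <= alpha i j t /\ alpha i j t <= amax))
  (Hcont : forall i j, (i < N)%nat -> (j < N)%nat -> ae_continuous (alpha i j))
  (Hconn : integrally_connected N alpha)
  (Hsol : caratheodory_solution N alpha s x) :
  forall i, (i < N)%nat ->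
    exists xstar, lim_infty (x i) xstar /\
      ((S i < N)%nat -> - s (pred N) <= xstar <= s (pred N)).
Proof.
  intros i0 Hi0.
  assert (HN : (0 < N)%nat) by lia.
  assert (Hsge : forall i, (i < N)%nat -> s (pred N) <= s i).
  { intros i Hi. destruct (Nat.eq_dec i (pred N)). - subst; lra. - apply Rlt_le, (s_dec_gen N s Hs_dec); lia. }
  assert (H : Setting N s alpha amax x).
  { split.
    - intros i Hi. specialize (Hsge i Hi). lra.
    - intros i Hi. destruct i. lra. apply Rlt_le, (s_dec_gen N s Hs_dec); lia.
    - auto.
    - intros i j t Ht. destruct (Hvals i j t Ht) as [->|]; lra.
    - intros i Hi a b Hab. destruct (Hsol i Hi b ltac:(lra)) as [prb Eb].
      destruct (Hsol i Hi a ltac:(lra)) as [pra Ea].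
      pose (pab := RiemannInt_P23 prb (conj (proj1 Hab) (proj2 Hab))).
      exists pab. pose proof (RiemannInt_P25 pra pab prb (proj1 Hab) (proj2 Hab)). lra. }
  assert (Hs0 : forall j (t : R), (j < N)%nat -> 0 <= s j) by (intros; apply Rlt_le, (st_spos _ _ _ _ _ H); auto).
  destruct (mono_conv (Mx N s x) (- s 0%nat)) as [L1 [HL1 HL1b]].
  { intros t u Ht Htu. apply (Mx_mono _ _ _ _ _ H); auto. }
  { intros t Ht. apply (Mx_lb _ _ _ _ _ H); auto. }
  pose proof (setting_neg _ _ _ _ _ H) as Hn.
  destruct (mono_conv (Mx N s (negx x)) (- s 0%nat)) as [L2 [HL2 HL2b]].
  { intros t u Ht Htu. apply (Mx_mono _ _ _ _ _ Hn); auto. }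
  { intros t Ht. apply (Mx_lb _ _ _ _ _ Hn); auto. }
  pose proof (consensus _ _ _ _ _ H HN Hconn L1 L2 HL1b HL2b) as C1.
  assert (C2 : 0 <= L1 + 1 * L2).
  { apply (lim_io (fun t => Mx N s x t + 1 * Mx N s (negx x) t)); [|apply lim_lin; auto].
    intros T. exists (Rmax T 0). split; [apply Rmax_l|].
    pose proof (Mx_ge N s x 0 (Rmax T 0) HN). pose proof (Mx_ge N s (negx x) 0 (Rmax T 0) HN).
    rewrite yv_neg in H1 by (apply (Hs0 0%nat 0); auto). lra. }
  assert (E : L1 + L2 = 0) by lra.
  set (c := L1).
  assert (Yc : forall i, (i < N)%nat -> lim_infty (yv s x i) c) by (intros; apply (y_conv N s x L1 L2); auto).
  assert (Cb : Rabs c <= s (pred N)).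
  { assert (Hl : (pred N < N)%nat) by lia. pose proof (Yc _ Hl) as Y.
    assert (c <= s (pred N)).
    { apply (lim_le (yv s x (pred N))); auto. intros t Ht. apply sat_bound. lra. }
    assert (- s (pred N) <= c).
    { apply (lim_io (yv s x (pred N))); auto. intros T. exists T. split; [lra|]. apply sat_bound. lra. }
    unfold Rabs; destruct Rcase_abs; lra. }
  assert (Xc : forall i, (S i < N)%nat -> lim_infty (x i) c).
  { intros i Hi eps Heps. assert (Hsi : s (pred N) < s i) by (apply (s_dec_gen N s Hs_dec); lia).
    destruct (Yc i ltac:(lia) (Rmin eps (s i - Rabs c)) ltac:(apply Rmin_glb_lt; lra)) as [T HT].
    exists (Rmax T 0). intros t Ht. specialize (HT t ltac:(pose proof (Rmax_l T 0); lra)).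
    pose proof (Rmin_l eps (s i - Rabs c)). pose proof (Rmin_r eps (s i - Rabs c)).
    unfold yv in HT. rewrite <- (sat_inv (s i) (x i t)). lra. lra.
    pose proof (Rabs_triang_inv (sat (s i) (x i t)) c).
    assert (Rabs (sat (s i) (x i t)) <= Rabs (sat (s i) (x i t) - c) + Rabs c) by lra. lra. }
  destruct (Nat.eq_dec (S i0) N) as [Eq|Neq].
  -
    set (C0 := sumN N (fun j => x j 0)).
    exists (C0 + (-1) * sumN i0 (fun _ => c)). split; [|lia].
    apply (lim_ext (fun t => C0 + (-1) * sumN i0 (fun j => x j t))).
    + intros t Ht. pose proof (conservation _ _ _ _ _ H t Ht).
      assert (sumN N (fun j => x j t) = sumN i0 (fun j => x j t) + x i0 t) by (rewrite <- Eq; reflexivity).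
      unfold C0. lra.
    + apply lim_lin; [apply lim_const|]. apply (lim_sum i0 (fun j t => x j t) (fun _ => c)).
      intros k Hk. apply Xc. lia.
  - exists c. split; [apply Xc; lia|]. intros _. unfold Rabs in Cb; destruct Rcase_abs; lra.
Qed.
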